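(* Let $G\in\mathcal{G}(\widehat{C}_6,\widehat{C}_7)$, let $x\in V(G)$, let $A$ be a connected component of $G[N_2(x)]$ not belonging to $A^*$, and let $a\in V(A)$ have a neighbour in $A$. Suppose $N(a)\cap D=\{v_1,\dots,v_k\}$ with $k>2$. Then $N(\{v_1,\dots,v_k\})\cap N_2(x)=\{a\}$.
   Context: All graphs are finite, simple and undirected. $\mathcal{G}(\widehat{C}_6,\widehat{C}_7)$ is the family of graphs with no subgraph (not necessarily induced) isomorphic to $C_6$ or $C_7$. For a vertex set $S$, $N_i(S)$ is the set of vertices at distance exactly $i$ from $S$, $N(S)=N_1(S)$, $N[S]=S\cup N(S)$, $N(v)=N(\{v\})$, $N_2(v)=N_2(\{v\})$ (all in $G$). $A^*$ is the set of connected components $A$ of $G[N_2(x)]$ for which there exists a vertex $a\in V(A)$ with $N(x)\cap N(a)=N(x)\cap N(V(A))$; $V(A^* )$ is the union of their vertex sets; and $D=N(x)\setminus N(V(A^* ))$ (the vertices of $N(x)$ having no neighbour in a component of $A^*$). *)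

(* Defs.v *)
From mathcomp Require Import all_boot.
Set Implicit Arguments. Unset Strict Implicit. Unset Printing Implicit Defensive.

Section G.
Variables (T : finType) (e : rel T).

Definition simple_graph := symmetric e /\ irreflexive e.

(* G contains a (not necessarily induced) cycle of length n *)
Definition has_cycle_of_length (n : nat) :=
  exists s : seq T, [/\ size s = n, uniq s & cycle e s].

Definition C6C7_free := ~ has_cycle_of_length 6 /\ ~ has_cycle_of_length 7.

Definition Nv (v : T) : {set T} := [set u | e v u].
Definition NS (S : {set T}) : {set T} :=
  [set u | (u \notin S) && [exists s in S, e s u]].
Definition N2 (v : T) : {set T} :=
  [set u | [&& u != v, ~~ e v u & [exists w, e v w && e w u]]].

Definition eN2 (x : T) : rel T :=
  fun u w => [&& e u w, u \in N2 x & w \in N2 x].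

Definition compN2 (x a0 : T) : {set T} := [set y | connect (eN2 x) a0 y].

Definition comps (x : T) : {set {set T}} :=
  [set A | [exists a0 in N2 x, A == compN2 x a0]].

Definition Astar (x : T) : {set {set T}} :=
  [set A in comps x | [exists a in A, Nv x :&: Nv a == Nv x :&: NS A]].

Definition VAstar (x : T) : {set T} := \bigcup_(A in Astar x) A.

Definition Dset (x : T) : {set T} := Nv x :\: NS (VAstar x).

End G.

(* Main.v *)
Require Import Defs.
From mathcomp Require Import all_boot.
From Stdlib Require Import Classical.

Lemma closure (T : finType) (R : rel T) (P : T -> Prop) s z :
  (forall q q', R q q' -> P q -> P q') -> connect R s z -> P s -> P z.
Proof.
move=> step /connectP [p]; elim: p s => [|q p IH] s /=; first by move=> _ ->.
case/andP=> Rsq pq Ez Ps; exact: (IH q pq Ez (step _ _ Rsq Ps)).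
Qed.

Lemma closure_t (T : finType) (R : rel T) (P : T -> Prop) s z t :
  (forall q q', R q q' -> P q -> q' <> t -> P q') -> connect R s z -> P s ->
  P z \/ exists q, P q /\ R q t.
Proof.
move=> step c Ps.
apply: (@closure _ _ (fun q => P q \/ exists q0, P q0 /\ R q0 t)) c (or_introl Ps).
move=> q q' Rqq' [Pq|Hq]; last by right.
case: (eqVneq q' t) => [E|ne]; first by right; exists q; rewrite -E.
left; apply: step Pq _ => //; exact/eqP.
Qed.

Lemma inN2 (T : finType) (e : rel T) x z :
  z \in N2 e x -> [/\ z <> x, e x z = false & exists w, e x w /\ e w z].
Proof.
rewrite inE => /and3P [/eqP H1 /negbTE H2 /existsP [w /andP [H3 H4]]].
by split => //; exists w.
Qed.

Lemma compN2_sub (T : finType) (e : rel T) x a0 z :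
  a0 \in N2 e x -> z \in compN2 e x a0 -> z \in N2 e x.
Proof.
move=> H0; rewrite inE => c.
apply: (@closure _ _ (fun q => q \in N2 e x)) c H0.
by move=> q q' /and3P [].
Qed.

Lemma comps_sub (T : finType) (e : rel T) x A z :
  A \in comps e x -> z \in A -> z \in N2 e x.
Proof.
rewrite inE => /existsP [a0 /andP [H0 /eqP ->]]; exact: compN2_sub.
Qed.

Arguments comps_sub {T e x A z}.
Arguments compN2_sub {T e x a0 z}.
Arguments inN2 {T e x z}.

Ltac symall e Hsym :=
  repeat match goal with
  | H : is_true (e ?p ?q) |- _ =>
      lazymatch goal with
      | _ : is_true (e q p) |- _ => fail
      | _ => assert (is_true (e q p)) by (rewrite Hsym; exact H)
      end
  | H : e ?p ?q = false |- _ =>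
      lazymatch goal with
      | _ : e q p = false |- _ => fail
      | _ => assert (e q p = false) by (rewrite Hsym; exact H)
      end
  end.

Ltac irrall T e Hirr :=
  repeat match goal with
  | v : _ |- _ =>
      lazymatch goal with
      | _ : e v v = false |- _ => fail
      | _ => assert (e v v = false) by apply Hirr
      end
  end.

Ltac contra := match goal with
  | H : ?p = true, H' : ?p = false |- _ => rewrite H in H'; discriminate
  | H : ?p <> ?p |- _ => exact (H erefl)
  end.

Ltac dist := match goal with |- is_true (?u != ?v) =>
  apply/eqP => E; first [subst u | subst v]; unfold is_true in *; contra end.

Ltac mkcyc Hcy l :=
  apply Hcy; exists l; split;
  [ reflexivity
  | rewrite /= !inE !negb_or /=; repeat (apply/andP; split); try done; dist
  | rewrite /= ?andbT; repeat (apply/andP; split); assumption ].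

Theorem lemma2p10 (T : finType) (e : rel T) :
  simple_graph e -> C6C7_free e ->
  forall (x : T) (A : {set T}) (a : T),
    A \in comps e x -> A \notin Astar e x ->
    a \in A -> [exists b in A, e a b] ->
    2 < #|Nv e a :&: Dset e x| ->
    NS e (Nv e a :&: Dset e x) :&: N2 e x = [set a].
Proof.
move=> [Hsym Hirr] [Hf6 Hf7] x A a HA HnA Ha _ Hcard.
set V := Nv e a :&: Dset e x.
have HVP : forall v, v \in V -> [/\ e a v, e x v & v \notin NS e (VAstar e x)].
  move=> v; rewrite /V /Dset in_setI in_setD => /andP [H1 /andP [H2 H3]].
  by split => //; [move: H1 | move: H3]; rewrite inE.
have aN2 : a \in N2 e x := comps_sub HA Ha.
have [a0 [a0N2 Adef]] : exists a0, a0 \in N2 e x /\ A = compN2 e x a0.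
  move: HA; rewrite inE => /existsP [a0 /andP [H0 /eqP ->]]; by exists a0.
have Asym : connect_sym (eN2 e x).
  apply: sym_connect_sym => p q; rewrite /eN2 Hsym.
  by case: (e q p); rewrite //= andbC.
have Adef' : A = compN2 e x a.
  move: Ha; rewrite Adef inE => ca; apply/setP => y; rewrite !inE.
  apply/idP/idP => H; first by rewrite Asym in ca; exact: connect_trans ca H.
  exact: connect_trans ca H.
have [vA [vB [vAV vBV vAB]]] : exists vA vB, [/\ vA \in V, vB \in V & vA != vB].
  by apply/card_gt1P; apply: ltnW.
have [c [w [Hc Hac Hxw Hwc Hwa]]] :
    exists c w, [/\ c \in N2 e x, e a c, e x w, e w c & e w a = false].
  apply: NNPP => Hno.
  have H' : forall c w, c \in N2 e x -> e a c -> e x w -> e w c -> e w a.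
    move=> c w H1 H2 H3 H4; apply: NNPP => H5; apply: Hno; exists c, w.
    by split => //; apply/negbTE/negP.
  have PA : forall s, s \in A -> s \in N2 e x /\ forall y, e x y -> e y s -> e y a.
    move=> s; rewrite Adef' inE => cs.
    apply: (@closure _ _ (fun q => q \in N2 e x /\ forall y, e x y -> e y q -> e y a)) cs _;
      last by split.
    move=> q q' /and3P [Hqq' Hq Hq'] [_ Pq]; split => // y' Hxy' Hy'q'.
    apply: NNPP => /negP/negbTE Hy'a.
    case: (eqVneq q a) => [Eqa|Nqa].
      subst q; by rewrite (H' q' y') in Hy'a.
    have [qx Hxq [w0 [Hxw0 Hw0q]]] := inN2 Hq.
    have [q'x Hxq' _] := inN2 Hq'.
    have [ax Hxa _] := inN2 aN2.
    have Hw0a := Pq w0 Hxw0 Hw0q.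
    have [HavA HxvA _] := HVP _ vAV.
    have [HavB HxvB _] := HVP _ vBV.
    have Nqa' : q <> a by apply/eqP.
    have NAB : vA <> vB by apply/eqP.
    case: (eqVneq w0 vA) => [Ew0|Nw0].
    - subst w0. symall e Hsym. irrall T e Hirr.
      mkcyc Hf7 [:: x; y'; q'; q; vA; a; vB].
    - have Nw0' : w0 <> vA by apply/eqP.
      symall e Hsym. irrall T e Hirr.
      mkcyc Hf7 [:: x; y'; q'; q; w0; a; vA].
  move/negP: HnA; apply; rewrite inE HA /=; apply/existsP; exists a.
  rewrite Ha /=; apply/eqP/setP => y; rewrite !inE.
  case Hxy: (e x y) => //=.
  apply/idP/idP => [Hay|/andP [_ /existsP [s /andP [sA Hsy]]]].
  - apply/andP; split; last by apply/existsP; exists a; rewrite Ha.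
    apply/negP => yA; have [_ Hxy' _] := inN2 (comps_sub HA yA).
    by rewrite Hxy' in Hxy.
  - have [_ Ps] := PA s sA; rewrite Hsym; apply: Ps; [exact: Hxy | by rewrite Hsym].
have Hmain : forall u v1, u \in N2 e x -> u != a -> v1 \in V -> e v1 u -> False.
  move=> u v1 Hu Nua v1V Hv1u.
  have [v2 [v3 [v2V v3V v23]]] :
      exists v2 v3, [/\ v2 \in V :\ v1, v3 \in V :\ v1 & v2 != v3].
    apply/card_gt1P; rewrite (cardsD1 v1 V) v1V in Hcard; by [].
  move: v2V v3V; rewrite !in_setD1 => /andP [Nv21 v2V] /andP [Nv31 v3V].
  have [Hav1 Hxv1 Hv1NS] := HVP _ v1V.
  have [Hav2 Hxv2 _] := HVP _ v2V.
  have [Hav3 Hxv3 _] := HVP _ v3V.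
  have Nv21' : v2 <> v1 by apply/eqP.
  have Nv31' : v3 <> v1 by apply/eqP.
  have Nv23' : v2 <> v3 by apply/eqP.
  have Nua' : u <> a by apply/eqP.
  have [ux Hxu _] := inN2 Hu.
  have [ax Hxa _] := inN2 aN2.
  have [cx Hxc _] := inN2 Hc.
  have LA : forall z, z \in N2 e x -> e z v1 -> e z a -> False.
    move=> z Hz Hzv1 Hza.
    have [zx Hxz _] := inN2 Hz.
    case: (eqVneq z c) => [Ezc|Nzc].
    - subst z. clear HnA. symall e Hsym. irrall T e Hirr.
      mkcyc Hf6 [:: x; w; c; v1; a; v2].
    - have Nzc' : z <> c by apply/eqP. clear HnA. symall e Hsym. irrall T e Hirr.
      mkcyc Hf6 [:: x; v1; z; a; c; w].
  have pickv : forall y, exists vj, [/\ vj \in V, vj <> v1 & vj <> y].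
    move=> y; case: (eqVneq v2 y) => [E|N].
    - exists v3; split => //; move=> E3; apply: Nv23'; by rewrite E E3.
    - exists v2; split => //; exact/eqP.
  pose Pr q := q \in N2 e x /\ q <> a /\ forall y, e x y -> e y q -> e y u.
  have step : forall q q', eN2 e x q q' -> Pr q -> q' <> a -> Pr q'.
    move=> q q' /and3P [Hqq' Hq Hq'] [_ [Nqa Pq]] Nq'a; do 2 split => //.
    move=> y' Hxy' Hy'q'.
    apply: NNPP => /negP/negbTE Hy'u.
    have [vj [vjV Nvj1 Nvjy]] := pickv y'.
    have [Havj Hxvj _] := HVP _ vjV.
    have [q'x Hxq' _] := inN2 Hq'.
    case: (eqVneq q u) => [Equ|Nqu].
    - subst q. clear HnA LA pickv. symall e Hsym. irrall T e Hirr.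
      mkcyc Hf7 [:: x; y'; q'; u; v1; a; vj].
    have Nqu' : q <> u by apply/eqP.
    have [qx Hxq [w0 [Hxw0 Hw0q]]] := inN2 Hq.
    have Hw0u := Pq w0 Hxw0 Hw0q.
    case: (eqVneq w0 v1) => [Ew|Nw].
    - subst w0. clear HnA LA pickv. symall e Hsym. irrall T e Hirr.
      mkcyc Hf7 [:: x; y'; q'; q; v1; a; vj].
    - have Nw' : w0 <> v1 by apply/eqP.
      clear HnA LA pickv. symall e Hsym. irrall T e Hirr.
      mkcyc Hf7 [:: x; y'; q'; q; w0; u; v1].
  have Final : forall q, Pr q -> eN2 e x q a -> False.
    move=> q [Hq [Nqa Pq]] /and3P [Hqa _ _].
    have [qx Hxq [w0 [Hxw0 Hw0q]]] := inN2 Hq.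
    have Hw0u := Pq w0 Hxw0 Hw0q.
    case: (eqVneq q u) => [Equ|Nqu].
    - subst q. apply: (LA u Hu) Hqa; by rewrite Hsym.
    case: (eqVneq w0 v1) => [Ew|Nw].
    - subst w0. apply: (LA q Hq) Hqa; by rewrite Hsym.
    have Nqu' : q <> u by apply/eqP.
    have [vj [vjV Nvj1 Nvjy]] := pickv w0.
    have [Havj Hxvj _] := HVP _ vjV.
    have Nw' : w0 <> v1 by apply/eqP.
    clear HnA LA pickv step. symall e Hsym. irrall T e Hirr.
    mkcyc Hf7 [:: x; vj; a; q; w0; u; v1].
  have AllB : forall z, connect (eN2 e x) u z -> Pr z.
    move=> z cz.
    have Pru : Pr u by split => //; split.
    case: (@closure_t _ _ Pr u z a step cz Pru) => // [[q [Pq Rq]]].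
    exfalso; exact: Final Pq Rq.
  have BA : compN2 e x u \in Astar e x.
    rewrite inE; apply/andP; split.
      rewrite inE; apply/existsP; exists u; by rewrite Hu eqxx.
    apply/existsP; exists u; rewrite inE connect0 /=.
    apply/eqP/setP => y; rewrite !inE.
    case Hxy: (e x y) => //=.
    apply/idP/idP => [Huy | /andP [_ /existsP [s /andP [sB Hsy]]]].
    - apply/andP; split; last by apply/existsP; exists u; rewrite inE connect0.
      apply/negP => yB; have [Hy _] : Pr y by apply: AllB; move: yB; rewrite ?inE.
      have [_ Hxy' _] := inN2 Hy; by rewrite Hxy' in Hxy.
    - have [_ [_ Ps]] : Pr s by apply: AllB; move: sB; rewrite ?inE. rewrite Hsym; apply: Ps; [exact: Hxy | by rewrite Hsym].
  move/negP: Hv1NS; apply; rewrite /NS in_set; apply/andP; split.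
  - apply/negP => /bigcupP [B' B'A v1B'].
    have B'c : B' \in comps e x by move: B'A; rewrite inE => /andP [].
    have [_ Hxv1' _] := inN2 (comps_sub B'c v1B').
    by rewrite Hxv1' in Hxv1.
  - apply/existsP; exists u; rewrite Hsym Hv1u andbT.
    apply/bigcupP; exists (compN2 e x u) => //; by rewrite inE connect0.
apply/setP => z; rewrite in_setI in_set1.
case: (eqVneq z a) => [->|Nza].
- rewrite aN2 andbT /NS in_set; apply/andP; split.
  + apply/negP => aV; have [_ Hxa' _] := HVP _ aV.
    have [_ Hxa _] := inN2 aN2; by rewrite Hxa in Hxa'.
  + apply/existsP; exists vA; rewrite vAV /=.
    have [HavA _ _] := HVP _ vAV; by rewrite Hsym.
- apply/negbTE/negP => /andP [HzNS HzN2].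
  move: HzNS; rewrite /NS in_set => /andP [_ /existsP [s /andP [sV Hsz]]].
  exact: Hmain z s HzN2 Nza sV Hsz.
Qed.
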